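(* In the event-driven HotStuff implementation (as defined in the context), let $b$ and $w$ be two conflicting nodes. Then $b$ and $w$ cannot both become committed, each by an honest replica.
   Context: There are $n = 3f+1$ replicas, at most $f$ of which are Byzantine; the others are honest. Messages are signed with unforgeable signatures. Replicas build a tree of nodes; each node $b$ has a parent $b.\mathit{parent}$, a height $b.\mathit{height}$ equal to its parent's height plus one, a command $b.\mathit{cmd}$, and a quorum certificate $b.\mathit{justify}$. A (valid) quorum certificate (QC) for a node $x$ consists of votes for $x$ signed by $2f+1$ distinct replicas; $\mathit{qc}.\mathit{node}$ denotes the node it refers to. A node $x$ extends $y$ if $y$ is $x$ or an ancestor of $x$; two nodes are conflicting if neither extends the other. Each honest replica keeps $\mathit{vheight}$ (height of the last node it voted for), a locked node $b_{\mathit{lock}}$, a last executed node $b_{\mathit{exec}}$, and a highest known QC $\mathit{qc}_{\mathit{high}}$. Voting: upon receiving a proposal $b_{\mathit{new}}$, the replica votes for $b_{\mathit{new}}$ only if $b_{\mathit{new}}.\mathit{height} > \mathit{vheight}$ and ($b_{\mathit{new}}$ extends $b_{\mathit{lock}}$ or $b_{\mathit{new}}.\mathit{justify}.\mathit{node}.\mathit{height} > b_{\mathit{lock}}.\mathit{height}$); when voting it sets $\mathit{vheight} \leftarrow b_{\mathit{new}}.\mathit{height}$. Update on receiving a node $b^{*}$: let $b'' = b^{*}.\mathit{justify}.\mathit{node}$, $b' = b''.\mathit{justify}.\mathit{node}$, $b = b'.\mathit{justify}.\mathit{node}$. The replica updates $\mathit{qc}_{\mathit{high}}$ with $b^{*}.\mathit{justify}$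 if it refers to a higher node; if $b'.\mathit{height} > b_{\mathit{lock}}.\mathit{height}$ it sets $b_{\mathit{lock}} \leftarrow b'$; and if $b''.\mathit{parent} = b'$ and $b'.\mathit{parent} = b$, it commits $b$ by calling $\mathrm{onCommit}(b)$ and sets $b_{\mathit{exec}} \leftarrow b$. Here $\mathrm{onCommit}(x)$: if $b_{\mathit{exec}}.\mathit{height} < x.\mathit{height}$, call $\mathrm{onCommit}(x.\mathit{parent})$ and then execute $x.\mathit{cmd}$. A node is committed by a replica when $\mathrm{onCommit}$ is invoked on it or on a descendant of it in this way (i.e., via a QC Three-Chain $b, b', b'', b^{*}$ with direct parent links $b \gets b' \gets b''$). *)

(* Defs.v *)
From mathcomp Require Import all_boot.
Set Implicit Arguments. Unset Strict Implicit. Unset Printing Implicit Defensive.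

Definition replica (f : nat) := 'I_(3 * f + 1).

Section HotStuff.
Variable f : nat.
Variable Node : eqType.

(* A quorum certificate: the node it refers to and the set of (distinct)
   replicas whose signed votes it contains. *)
Record QC := mkQC { qc_node : Node; qc_sigs : {set replica f} }.

(* The tree of nodes: every node has a parent (except the genesis node b0),
   a height and a justify QC.  (Commands are irrelevant for safety.) *)
Record tree := Tree {
  genesis : Node;
  parent  : Node -> option Node;
  height  : Node -> nat;
  justify : Node -> QC }.

Variable T : tree.

Inductive extends : Node -> Node -> Prop :=
| extends_refl x : extends x x
| extends_step x p y : parent T x = Some p -> extends p y -> extends x y.

Definition conflicting (x y : Node) : Prop := ~ extends x y /\ ~ extends y x.

Definition wf_tree : Prop :=
  [/\ parent T (genesis T) = None,
      (forall x, x <> genesis T -> exists p, parent T x = Some p),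
      (forall x p, parent T x = Some p -> height T x = (height T p).+1),
      qc_node (justify T (genesis T)) = genesis T
    & (forall x, x <> genesis T ->
         extends x (qc_node (justify T x)) /\ qc_node (justify T x) <> x)].

Record rstate := RState {
  vheight : nat;
  block   : Node;
  bexec   : Node;
  qchigh  : QC }.

Definition init_state : rstate :=
  RState (height T (genesis T)) (genesis T) (genesis T) (justify T (genesis T)).

Definition vote_rule (s : rstate) (bnew : Node) : Prop :=
  vheight s < height T bnew /\
  (extends bnew (block s) \/
   height T (block s) < height T (qc_node (justify T bnew))).

(* One step of an honest replica on receiving proposal bnew: first the voting
   decision [v], then update(bnew); [com] is Some b iff onCommit(b) is called. *)
Definition hs_step (s : rstate) (bnew : Node) (v : bool) (com : option Node)
    (s' : rstate) : Prop :=
  let b2 := qc_node (justify T bnew) in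
  let b1 := qc_node (justify T b2) in
  let b0 := qc_node (justify T b1) in
  [/\ (v <-> vote_rule s bnew),
      vheight s' = (if v then height T bnew else vheight s),
      qchigh s' = (if height T (qc_node (qchigh s)) < height T b2
                   then justify T bnew else qchigh s),
      block s' = (if height T (block s) < height T b1 then b1 else block s)
    & (if (parent T b2 == Some b1) && (parent T b1 == Some b0)
       then com = Some b0 /\ bexec s' = b0
       else com = None /\ bexec s' = bexec s)].

(* The local execution of a replica: the sequence of proposals it processes,
   the states before/after each step, whether it voted at each step, which
   node (if any) onCommit was called on, and the global time of each step. *)
Record run := Run {
  inputs  : seq Node;
  states  : nat -> rstate;
  votes   : nat -> bool;
  commits : nat -> option Node;
  times   : nat -> nat }.

Definition valid_run (R : run) : Prop :=
  [/\ states R 0 = init_state,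
      (forall i, i < size (inputs R) ->
         hs_step (states R i) (nth (genesis T) (inputs R) i) (votes R i)
                 (commits R i) (states R i.+1))
    & (forall i j, i < j -> j < size (inputs R) -> times R i < times R j)].

(* A node x is committed by a replica with run R if onCommit is invoked (via a
   three-chain) on x or on a descendant of x. *)
Definition committed_by (R : run) (x : Node) : Prop :=
  exists i b, [/\ i < size (inputs R), commits R i = Some b & extends b x].

(* A global execution: Hs is the set of honest replicas (at most f Byzantine),
   E r is the local execution of replica r (meaningful for honest r), ctime x is
   the global time at which node x is created.
   - honest replicas follow the protocol;
   - a replica can only process a node after it was created;
   - every QC carried by a node is valid: either the genesis QC, or it has
     2f+1 distinct signers, and (unforgeable signatures) every honest signer
     did vote for the referred node, before the carrying node was created. *)
Definition valid_execution (Hs : {set replica f}) (ctime : Node -> nat)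
    (E : replica f -> run) : Prop :=
  [/\ #|~: Hs| <= f,
      (forall r, r \in Hs -> valid_run (E r)),
      (forall r i, r \in Hs -> i < size (inputs (E r)) ->
         ctime (nth (genesis T) (inputs (E r)) i) <= times (E r) i)
    & (forall x, x <> genesis T ->
         qc_node (justify T x) = genesis T \/
         (2 * f + 1 <= #|qc_sigs (justify T x)| /\
          forall r, r \in Hs -> r \in qc_sigs (justify T x) ->
            exists i, [/\ i < size (inputs (E r)), votes (E r) i,
                          nth (genesis T) (inputs (E r)) i = qc_node (justify T x)
                        & times (E r) i < ctime x]))].

End HotStuff.

(* Main.v *)
Require Import Defs.
From mathcomp Require Import all_boot.
From mathcomp Require Import zify.
Set Implicit Arguments. Unset Strict Implicit. Unset Printing Implicit Defensive.

Section Tree.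
Variables (f : nat) (Node : eqType) (T : tree f Node).
Hypothesis Hwf : wf_tree T.

Local Notation G := (genesis T).
Local Notation h := (height T).
Local Notation qc x := (qc_node (justify T x)).

Lemma ext_height x y : extends T x y -> x = y \/ h y < h x.
Proof.
elim=> [z|z p w Hp _ IH]; first by left.
case: Hwf => _ _ Hh _ _. rewrite (Hh _ _ Hp). right.
case: IH => [->|]; lia.
Qed.

Lemma ext_trans x y z : extends T x y -> extends T y z -> extends T x z.
Proof.
elim=> [//|a p w Hp _ IH] Hz. exact: extends_step Hp (IH Hz).
Qed.

Lemma ext_gen x : extends T x G.
Proof.
move: {-1}(h x) (leqnn (h x)) => k; elim: k x => [|k IH] x Hk.
  case: (eqVneq x G) => [->|/eqP Hx]; first exact: extends_refl.
  case: Hwf => _ Hp Hh _ _. have [p Hxp] := Hp _ Hx.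
  move: (Hh _ _ Hxp); lia.
case: (eqVneq x G) => [->|/eqP Hx]; first exact: extends_refl.
case: Hwf => _ Hp Hh _ _. have [p Hxp] := Hp _ Hx.
have := Hh _ _ Hxp => E1. apply: (extends_step Hxp); apply: IH. lia.
Qed.

Lemma ext_cmp x y z : extends T x y -> extends T x z ->
  extends T y z \/ extends T z y.
Proof.
move=> H; elim: H z => [a|a p w Hp Hpw IH] z Hz; first by left.
inversion Hz; subst.
  right; exact: extends_step Hp Hpw.
apply: IH. by rewrite Hp in H; case: H => ->.
Qed.

Lemma qc_le x : h (qc x) <= h x.
Proof.
case: (eqVneq x G) => [->|/eqP Hx]; first by case: Hwf => _ _ _ -> _.
case: Hwf => _ _ _ _ Hj. have [H1 H2] := Hj _ Hx.
case: (ext_height H1) => [E1|]; [by rewrite -E1|exact: ltnW].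
Qed.

Lemma qc_lt x : x <> G -> h (qc x) < h x.
Proof.
move=> Hx; case: Hwf => _ _ _ _ Hj. have [H1 H2] := Hj _ Hx.
by case: (ext_height H1) => // E; exfalso; apply: H2.
Qed.

Lemma gen_lt x : x <> G -> h G < h x.
Proof.
move=> Hx; case: (ext_height (ext_gen x)) => //.
Qed.

Definition cert n := n = G \/ exists x, x <> G /\ qc x = n.

Lemma cert_qcqc X : cert (qc (qc X)).
Proof.
case: (eqVneq (qc X) G) => [->|/eqP HX].
  by left; case: Hwf => _ _ _ -> _.
by right; exists (qc X); split => //.
Qed.

Section Run.
Variable R : run f Node.
Hypothesis HR : valid_run T R.
Local Notation st k := (states R k).
Local Notation inp i := (nth G (inputs R) i).

Lemma step_vh i : i < size (inputs R) -> vheight (st i) <= vheight (st i.+1).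
Proof.
move=> Hi; case: HR => _ Hs _; case: (Hs i Hi) => Hv -> _ _ _.
by case: (votes R i) Hv => // [[+ _]] => /(_ erefl) [/ltnW].
Qed.

Lemma step_lk i : i < size (inputs R) -> h (block (st i)) <= h (block (st i.+1)).
Proof.
move=> Hi; case: HR => _ Hs _; case: (Hs i Hi) => _ _ _ -> _.
by case: ifP => // /ltnW.
Qed.

Lemma mono k m : k <= m <= size (inputs R) ->
  vheight (st k) <= vheight (st m) /\ h (block (st k)) <= h (block (st m)).
Proof.
elim: m => [|m IH]; first by case: k => //.
move=> /andP[Hkm Hm]. rewrite leq_eqVlt in Hkm. case/orP: Hkm => [/eqP->//|Hkm].
have [H1 H2] := IH (introT andP (conj Hkm (ltnW Hm))).
have := step_vh Hm; have := step_lk Hm; lia.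
Qed.

Lemma inv k : k <= size (inputs R) ->
  h (block (st k)) <= vheight (st k) /\ cert (block (st k)).
Proof.
elim: k => [|k IH] Hk.
  case: HR => -> _ _ /=; split => //; by left.
have [I1 I2] := IH (ltnW Hk).
case: HR => _ Hs _; case: (Hs k Hk) => Hv -> _ -> _.
split; last by case: ifP => // _; apply: cert_qcqc.
have L1 := qc_le (qc (inp k)). have L2 := qc_le (inp k).
case: (votes R k) Hv => Hv.
  have [V1 _] := (proj1 Hv erefl).
  case: ifP => _; lia.
case: ifP => // Hlt.
case: (leqP (h (qc (qc (inp k)))) (vheight (st k))) => // Hc.
exfalso; have: false = true by apply Hv; split; [lia| right; lia].
by [].
Qed.

Lemma vote_order i j : j < size (inputs R) -> votes R i -> votes R j -> i < j ->
  h (inp i) < h (inp j).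
Proof.
move=> Hj Vi Vj Hij. have Hi : i < size (inputs R) by lia.
case: HR => _ Hs _.
case: (Hs i Hi) => Hv1 Hvh1 _ _ _. case: (Hs j Hj) => Hv2 _ _ _ _.
have [A _] := proj1 Hv2 Vj.
rewrite Vi in Hvh1.
have [B _] := mono (introT andP (conj Hij (ltnW Hj))).
lia.
Qed.

Lemma vote_uniq i j : i < size (inputs R) -> j < size (inputs R) ->
  votes R i -> votes R j -> h (inp i) = h (inp j) -> inp i = inp j.
Proof.
move=> Hi Hj Vi Vj E.
case: (ltngtP i j) => [Hij|Hij|-> //].
  by have := vote_order Hj Vi Vj Hij; lia.
by have := vote_order Hi Vj Vi Hij; lia.
Qed.

End Run.

Variables (Hs : {set replica f}) (ctime : Node -> nat) (E : replica f -> run f Node).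
Hypothesis Hval : valid_execution T Hs ctime E.

Lemma quorum (A B : {set replica f}) : 2 * f + 1 <= #|A| -> 2 * f + 1 <= #|B| ->
  exists r, [/\ r \in Hs, r \in A & r \in B].
Proof.
move=> HA HB.
have h1 := cardsUI A B.
have h2 : #|A :|: B| <= 3 * f + 1.
  apply: (leq_trans (max_card _)). by rewrite card_ord.
have h3 := cardsID Hs (A :&: B).
have h4 : #|A :&: B :\: Hs| <= #|~: Hs|.
  apply: subset_leq_card; apply/subsetP => r; rewrite !inE.
  by case/andP.
case: Hval => Hf _ _ _.
have : 0 < #|A :&: B :&: Hs| by lia.
rewrite card_gt0 => /set0Pn [r]. rewrite !inE => /andP [/andP [Ha Hb] Hr].
by exists r.
Qed.

Lemma common_voter x y : x <> G -> y <> G -> qc x <> G -> qc y <> G ->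
  exists r i j, [/\ r \in Hs, i < size (inputs (E r)), j < size (inputs (E r)),
     votes (E r) i /\ votes (E r) j
   & nth G (inputs (E r)) i = qc x /\ nth G (inputs (E r)) j = qc y].
Proof.
move=> Hx Hy Hqx Hqy. case: Hval => _ _ _ Hq.
case: (Hq x Hx) => // [[Sx Vx]]. case: (Hq y Hy) => // [[Sy Vy]].
have [r [Hr Ha Hb]] := quorum Sx Sy.
have [i [Hi Vi Ni _]] := Vx r Hr Ha. have [j [Hj Vj Nj _]] := Vy r Hr Hb.
by exists r, i, j; split.
Qed.

Lemma uniq_cert x y : x <> G -> y <> G -> qc x <> G -> qc y <> G ->
  h (qc x) = h (qc y) -> qc x = qc y.
Proof.
move=> Hx Hy Hqx Hqy He.
have [r [i [j [Hr Hi Hj [Vi Vj] [Ni Nj]]]]] := common_voter Hx Hy Hqx Hqy.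
case: Hval => _ Hrun _ _.
rewrite -Ni -Nj; apply: (vote_uniq (Hrun r Hr)) => //; by rewrite Ni Nj.
Qed.

Lemma par_ne x p : parent T x = Some p -> x <> G.
Proof. by case: Hwf => H0 _ _ _ _ Hx E0; rewrite E0 H0 in Hx. Qed.

Lemma par_h x p : parent T x = Some p -> h x = (h p).+1.
Proof. by case: Hwf => _ _ Hh _ _; apply: Hh. Qed.

Section Safe.
Variables (X : Node).
Hypothesis HX : X <> G.
Hypothesis P2 : parent T (qc X) = Some (qc (qc X)).
Hypothesis P1 : parent T (qc (qc X)) = Some (qc (qc (qc X))).
Local Notation b2 := (qc X).
Local Notation b1 := (qc (qc X)).
Local Notation c := (qc (qc (qc X))).

Lemma safe_aux k n : h n < k -> cert n -> h c <= h n -> extends T n c.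
Proof.
elim: k n => [//|k IH] n Hk Hc Hle.
have Hb2 : b2 <> G := par_ne P2. have Hb1 : b1 <> G := par_ne P1.
have H2 := par_h P2. have H1 := par_h P1.
case: Hc => [En|[x [Hx Ex]]].
  subst n. case: (eqVneq c G) => [->|/eqP Hc]; first exact: extends_refl.
  by have := gen_lt Hc; lia.
subst n.
case: (eqVneq (qc x) G) => [En|/eqP Hn].
  rewrite En in Hle *.
  case: (eqVneq c G) => [Hc|/eqP Hc].
    by rewrite -{1}Hc; exact: extends_refl.
  by have := gen_lt Hc; lia.
case: (ltngtP (h (qc x)) (h c)) => [|Hgt|Heq]; first lia; last first.
  have Hc : c <> G by move=> Ec; have := gen_lt Hn; rewrite -Ec; lia.
  by rewrite (uniq_cert Hx Hb1 Hn Hc Heq); exact: extends_refl.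
case: (ltngtP (h (qc x)) (h b1)) => [|Hgt1|Heq1]; first lia; last first.
  rewrite (uniq_cert Hx Hb2 Hn Hb1 Heq1).
  exact: extends_step P1 (extends_refl _ _).
case: (ltngtP (h (qc x)) (h b2)) => [|Hgt2|Heq2]; first lia; last first.
  rewrite (uniq_cert Hx HX Hn Hb2 Heq2).
  exact: extends_step P2 (extends_step P1 (extends_refl _ _)).
have [r [i [j [Hr Hi Hj [Vi Vj] [Ni Nj]]]]] := common_voter Hx HX Hn Hb2.
case: Hval => _ Hrun _ _. have HR := Hrun r Hr.
have Hji : j < i.
  case: (ltngtP j i) => // Hij.
    by have := vote_order HR Hj Vi Vj Hij; rewrite Ni Nj; lia.
  by rewrite Hij in Nj; rewrite Nj in Ni; rewrite Ni in Hgt2; lia.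
have Lj : h c <= h (block (states (E r) j.+1)).
  case: HR => _ Hst _; case: (Hst j Hj) => _ _ _ -> _.
  rewrite Nj; case: ifP => //; lia.
have [_ Lm] := mono HR (introT andP (conj Hji (ltnW Hi))).
have [Iv Ic] := inv HR (ltnW Hi).
case: HR => _ Hst _; case: (Hst i Hi) => Hv _ _ _ _.
have [V1 V2] := proj1 Hv Vi. rewrite Ni in V1 V2.
case: V2 => V2.
  apply: ext_trans V2 _. apply: IH => //; lia.
have Hxn : qc x <> G := Hn.
apply: (ext_trans (proj1 (match Hwf with And5 _ _ _ _ Hj => Hj _ Hxn end))).
apply: IH.
- have := qc_lt Hxn; lia.
- by right; exists (qc x).
- lia.
Qed.

Lemma safe n : cert n -> h c <= h n -> extends T n c.
Proof. exact: (@safe_aux (h n).+1). Qed.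
End Safe.

Lemma commit_chain r x : r \in Hs -> committed_by T (E r) x ->
  exists X, [/\ X <> G, parent T (qc X) = Some (qc (qc X)),
     parent T (qc (qc X)) = Some (qc (qc (qc X))) & extends T (qc (qc (qc X))) x].
Proof.
move=> Hr [i [cb [Hi Hc Hx]]].
case: Hval => _ Hrun _ _. case: (Hrun r Hr) => _ Hst _.
case: (Hst i Hi) => _ _ _ _.
case: ifP => [/andP [/eqP P2 /eqP P1]|_ [E0 _]]; last by rewrite Hc in E0.
case=> E0 _. rewrite Hc in E0; case: E0 => E0; subst cb.
exists (nth G (inputs (E r)) i); split => //.
move=> EX; rewrite EX in P2. case: Hwf => H0 _ _ Hg _.
by rewrite Hg H0 in P2.
Qed.

End Tree.

Theorem mainTheorem3 (f : nat) (Node : eqType) (T : tree f Node)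
    (Hs : {set replica f}) (ctime : Node -> nat) (E : replica f -> run f Node) :
  wf_tree T ->
  valid_execution T Hs ctime E ->
  forall b w : Node, conflicting T b w ->
  forall r1 r2 : replica f, r1 \in Hs -> r2 \in Hs ->
  ~ (committed_by T (E r1) b /\ committed_by T (E r2) w).
Proof.
move=> Hwf Hval b w [Nbw Nwb] r1 r2 H1 H2 [C1 C2].
have [X [HX P2 P1 Eb]] := commit_chain Hwf Hval H1 C1.
have [Y [HY Q2 Q1 Ew]] := commit_chain Hwf Hval H2 C2.
set c := qc_node _ in Eb P1. set d := qc_node _ in Ew Q1.
have cc : cert T c by right; exists (qc_node (justify T (qc_node (justify T X)))); split => //; exact: (par_ne Hwf P1).
have cd : cert T d by right; exists (qc_node (justify T (qc_node (justify T Y)))); split => //; exact: (par_ne Hwf Q1).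
case: (leqP (height T c) (height T d)) => Hle.
  have Hdc := safe Hwf Hval HX P2 P1 cd Hle.
  have := ext_cmp (ext_trans Hdc Eb) Ew. by case.
have Hcd := safe Hwf Hval HY Q2 Q1 cc (ltnW Hle).
have := ext_cmp (ext_trans Hcd Ew) Eb. by case.
Qed.
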